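(* Let $k>0$ and let $f:\mathbb{R}^d\to\mathbb{R}$ be a scalar-valued neural network in $\mathcal{A}_k^{\infty}$, i.e. $f = l_{W_n,b_n}\circ \mathrm{ReLU}\circ l_{W_{n-1},b_{n-1}}\circ \cdots \circ \mathrm{ReLU}\circ l_{W_1,b_1}$ with $n\ge 2$ and $\prod_{i=1}^n \|W_i\|_\infty \le k$. Let $W_0\in\mathbb{R}^{d\times 1}$ and $b_0\in\mathbb{R}^d$ with $\|W_0\|_\infty = 1$, and define $h_{W_0,b_0}:\mathbb{R}\to\mathbb{R}$ by $h_{W_0,b_0} = f\circ l_{W_0,b_0}$. Then for any such choice of $W_0$ and $b_0$, $$I(h_{W_0,b_0}') \le 2k.$$
   Context: For a matrix $W$ and vector $b$, $l_{W,b}(x)=Wx+b$. $\mathrm{ReLU}$ is applied elementwise, $\mathrm{ReLU}(x)=\max(x,0)$. For a matrix $W$, $\|W\|_\infty=\sup_{x\ne 0}\|Wx\|_\infty/\|x\|_\infty$, which equals the maximum over rows of $W$ of the $\ell_1$ norm of the row. Derivatives are taken where they exist (the functions involved are piecewise linear), and $g(\pm\infty)$ denotes $\lim_{t\to\pm\infty} g(t)$. For $g:\mathbb{R}\to\mathbb{R}$, the total variation over $\mathbb{R}$ is $V_{-\infty}^{\infty}(g)=\sup_T\sum_{t_i\in T}|g(t_i)-g(t_{i-1})|$ over all finite partitions $T$, and the intrinsic variability of $g$ is $I(g)=V_{-\infty}^{\infty}(g)+|g(\infty)|+|g(-\infty)|$. *)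

(* Defs.v *)
From HB Require Import structures.
From mathcomp Require Import all_boot all_order all_algebra.
From mathcomp Require Import all_classical all_reals all_analysis.
Set Implicit Arguments. Unset Strict Implicit. Unset Printing Implicit Defensive.
Import Order.TTheory GRing.Theory Num.Theory.
Import numFieldNormedType.Exports.
Local Open Scope ring_scope.

Definition mx_norm_inf (R : realType) m n (A : 'M[R]_(m, n)) : R :=
  \big[Num.max/0]_(i < m) \sum_(j < n) `|A i j|.

Definition relu (R : realType) m n (A : 'M[R]_(m, n)) : 'M[R]_(m, n) :=
  map_mx (fun x => Num.max x 0) A.

(* Network with layer widths w 0 (= input dim), w 1, ..., w n.
   Layer i+1 (i < n) has weight W i : 'M_(w i.+1, w i) and bias b i.
   net_pre W b k x = output of the k-th affine layer (before ReLU),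
   with net_pre 0 x = x; ReLU is applied between consecutive affine layers. *)
Fixpoint net_pre (R : realType) (w : nat -> nat)
  (W : forall i : nat, 'M[R]_(w i.+1, w i)) (b : forall i : nat, 'cV[R]_(w i.+1))
  (k : nat) (x : 'cV[R]_(w 0%N)) : 'cV[R]_(w k) :=
  match k with
  | 0%N => x
  | k'.+1 => W k' *m ((if k' == 0%N then id else @relu R _ _) (net_pre W b k' x)) + b k'
  end.

(* scalar output: the network has w n = 1, so this sum is the unique entry *)
Definition net (R : realType) (w : nat -> nat)
  (W : forall i : nat, 'M[R]_(w i.+1, w i)) (b : forall i : nat, 'cV[R]_(w i.+1))
  (n : nat) (x : 'cV[R]_(w 0%N)) : R :=
  \sum_(i < w n) (net_pre W b n x) i 0.

Fixpoint var_sum (R : realType) (g : R -> R) (s : seq R) : R :=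
  match s with
  | x :: ((y :: _) as s') => `|g y - g x| + var_sum g s'
  | _ => 0
  end.

(* Main.v *)
Require Import Defs.
From HB Require Import structures.
From mathcomp Require Import all_boot all_order all_algebra.
From mathcomp Require Import all_classical all_reals all_analysis.
From mathcomp Require Import ring lra.
Import Order.TTheory GRing.Theory Num.Theory.
Import numFieldNormedType.Exports.
Local Open Scope ring_scope.
Local Open Scope classical_set_scope.

Module Helpers.
Set Implicit Arguments. Unset Strict Implicit. Unset Printing Implicit Defensive.
Section PL.
Variable R : realType.
Implicit Types (s u : seq (R * R)) (t : R).

Definition gmax (g : R * R -> R) (d : R) s := foldr (fun x a => Num.max (g x) a) d s.
Definition gm (g : R * R -> R) s := gmax g (g (head (0,0) s)) s.

Lemma gmax_ge g d s x : x \in s -> g x <= gmax g d s.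
Proof.
elim: s => //= y s IH; rewrite in_cons => /orP[/eqP->|/IH H].
  by rewrite le_max lexx.
by rewrite le_max H orbT.
Qed.

Lemma gmax_att g d s : gmax g d s = d \/ exists2 x, x \in s & gmax g d s = g x.
Proof.
elim: s => [|y s IH] /=; first by left.
case: (leP (g y) (gmax g d s)) => _.
  case: IH => [->|[x xs ->]]; first by left.
  by right; exists x => //; rewrite in_cons xs orbT.
by right; exists y => //; rewrite in_cons eqxx.
Qed.

Lemma gm_ge g s x : x \in s -> g x <= gm g s.
Proof. exact: gmax_ge. Qed.

Lemma gm_att g s : s != [::] -> exists2 x, x \in s & gm g s = g x.
Proof.
case: s => // y s _; rewrite /gm; case: (gmax_att g (g (head (0,0) (y :: s))) (y :: s)) => [->|//].
by exists y => //; rewrite in_cons eqxx.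
Qed.

Lemma gmE g s F : s != [::] -> (forall x, x \in s -> g x <= F) ->
  (exists2 x, x \in s & F = g x) -> gm g s = F.
Proof.
move=> s0 H [x xs EF]; subst F; apply/le_anti; rewrite gm_ge // andbT.
have [y ys E] := gm_att g s0; rewrite E; exact: H.
Qed.


Definition sadd s u := [seq (x.1 + y.1, x.2 + y.2) | x <- s, y <- u].
Definition sc (c : R) s := [seq (c * x.1, c * x.2) | x <- s].

Lemma sadd_nil s u : s != [::] -> u != [::] -> sadd s u != [::].
Proof. by case: s => // x s _; case: u. Qed.

Lemma sc_nil c s : s != [::] -> sc c s != [::].
Proof. by case: s. Qed.

Lemma cat_nil s u : s != [::] -> s ++ u != [::].
Proof. by case: s. Qed.

Lemma gm_add g s u : (forall x y, g (x.1 + y.1, x.2 + y.2) = g x + g y) ->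
  s != [::] -> u != [::] -> gm g (sadd s u) = gm g s + gm g u.
Proof.
move=> gA s0 u0; apply: gmE; first exact: sadd_nil.
  move=> z /allpairsP[[x y] /= [xs yu ->]]; rewrite gA.
  by apply: lerD; apply: gm_ge.
have [x xs ->] := gm_att g s0; have [y yu ->] := gm_att g u0.
by exists (x.1 + y.1, x.2 + y.2); [apply: (allpairs_f (fun x y => (x.1 + y.1, x.2 + y.2))) | rewrite gA].
Qed.

Lemma gm_sc g c s : 0 <= c -> (forall x, g (c * x.1, c * x.2) = c * g x) ->
  s != [::] -> gm g (sc c s) = c * gm g s.
Proof.
move=> c0 gZ s0; apply: gmE; first exact: sc_nil.
  move=> z /mapP[x xs ->]; rewrite gZ.
  by apply: ler_wpM2l => //; apply: gm_ge.
have [x xs ->] := gm_att g s0.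
by exists (c * x.1, c * x.2); [apply/mapP; exists x | rewrite gZ].
Qed.

Lemma gm_cat g s u : s != [::] -> u != [::] ->
  gm g (s ++ u) = Num.max (gm g s) (gm g u).
Proof.
move=> s0 u0; apply: gmE; first exact: cat_nil.
  move=> z; rewrite mem_cat le_max => /orP[zs|zu].
    by rewrite (gm_ge g zs).
  by rewrite (gm_ge g zu) orbT.
have [x xs ->] := gm_att g s0; have [y yu ->] := gm_att g u0.
case: (leP (g x) (g y)) => _.
  by exists y => //; rewrite mem_cat yu orbT.
by exists x => //; rewrite mem_cat xs.
Qed.


Definition aff (x : R * R) t := x.1 * t + x.2.
Definition mxa s t := gm (fun x => aff x t) s.
Definition hi s := gm (fun x => x.1) s.
Definition lo s := - gm (fun x => - x.1) s.
Definition Mof s u := (hi s - lo s) + (hi u - lo u) + `|hi s - hi u| + `|lo s - lo u|.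
Definition rep (f : R -> R) (M : R) := exists s u,
  [/\ s != [::], u != [::], (forall t, f t = mxa s t - mxa u t) & Mof s u <= M].

Lemma mxa_add s u t : s != [::] -> u != [::] -> mxa (sadd s u) t = mxa s t + mxa u t.
Proof. by apply: gm_add => x y; rewrite /aff /=; ring. Qed.
Lemma hi_add s u : s != [::] -> u != [::] -> hi (sadd s u) = hi s + hi u.
Proof. by apply: gm_add. Qed.
Lemma lo_add s u : s != [::] -> u != [::] -> lo (sadd s u) = lo s + lo u.
Proof. by move=> s0 u0; rewrite /lo gm_add // ?opprD // => x y /=; rewrite opprD. Qed.

Lemma mxa_sc c s t : 0 <= c -> s != [::] -> mxa (sc c s) t = c * mxa s t.
Proof. by move=> c0; apply: gm_sc => // x; rewrite /aff /=; ring. Qed.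
Lemma hi_sc c s : 0 <= c -> s != [::] -> hi (sc c s) = c * hi s.
Proof. by move=> c0; apply: gm_sc. Qed.
Lemma lo_sc c s : 0 <= c -> s != [::] -> lo (sc c s) = c * lo s.
Proof. by move=> c0 s0; rewrite /lo gm_sc // ?mulrN // => x /=; rewrite mulrN. Qed.

Lemma mxa_cat s u t : s != [::] -> u != [::] -> mxa (s ++ u) t = Num.max (mxa s t) (mxa u t).
Proof. exact: gm_cat. Qed.
Lemma hi_cat s u : s != [::] -> u != [::] -> hi (s ++ u) = Num.max (hi s) (hi u).
Proof. exact: gm_cat. Qed.
Lemma lo_cat s u : s != [::] -> u != [::] -> lo (s ++ u) = Num.min (lo s) (lo u).
Proof.
move=> s0 u0; rewrite /lo gm_cat //.
by case: (leP (gm (fun x => - x.1) s) (gm (fun x => - x.1) u)) => H;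
  case: (leP (- gm (fun x => - x.1) s) (- gm (fun x => - x.1) u)) => H' //; lra.
Qed.

Lemma abs_cases (x : R) : (0 <= x /\ `|x| = x) \/ (x < 0 /\ `|x| = - x).
Proof.
case: (leP 0 x) => H; first by left; rewrite ger0_norm.
by right; rewrite ltr0_norm.
Qed.

Lemma rep_ext f g M : (forall t, f t = g t) -> rep f M -> rep g M.
Proof. by move=> fg [s [u [s0 u0 E HM]]]; exists s, u; split => // t; rewrite -fg. Qed.

Lemma rep_le f M N : M <= N -> rep f M -> rep f N.
Proof. by move=> MN [s [u [s0 u0 E HM]]]; exists s, u; split => //; apply: le_trans MN. Qed.

Lemma rep_aff a c : rep (fun t => a * t + c) (2 * `|a|).
Proof.
exists [:: (a, c)], [:: (0, 0)]; split => //.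
  by move=> t; rewrite /mxa /gm /gmax /= /aff /= !maxxx; ring.
rewrite /Mof /hi /lo /gm /gmax /= !maxxx !(opprK, subr0, oppr0, subrr, addr0, add0r, opprB).
by rewrite mulr2n mulrDl mul1r lexx.
Qed.

Lemma rep_relu f M : rep f M -> rep (fun t => Num.max (f t) 0) M.
Proof.
move=> [s [u [s0 u0 E HM]]]; exists (s ++ u), u; split => //.
- exact: cat_nil.
- move=> t; rewrite E mxa_cat //.
  by case: (leP (mxa s t - mxa u t) 0) => H; case: (leP (mxa s t) (mxa u t)) => H'; lra.
apply: le_trans HM; rewrite /Mof hi_cat // lo_cat //.
move: (hi s) (lo s) (hi u) (lo u) => a2 a1 b2 b1.
case: (leP a2 b2) => H1; case: (leP a1 b1) => H2;
  case: (abs_cases (a2 - b2)) => [[? ->]|[? ->]];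
  case: (abs_cases (a1 - b1)) => [[? ->]|[? ->]];
  rewrite ?subrr ?normr0; 
  try (case: (abs_cases (b2 - b2)) => [[? ->]|[? ->]]);
  try (case: (abs_cases (b1 - b1)) => [[? ->]|[? ->]]);
  try (case: (abs_cases (a2 - b2)) => [[? ->]|[? ->]]);
  try (case: (abs_cases (a1 - b1)) => [[? ->]|[? ->]]); lra.
Qed.


Lemma tri4 (a b c d : R) : `|(a + b) - (c + d)| <= `|a - c| + `|b - d|.
Proof. by rewrite (_ : (a + b) - (c + d) = (a - c) + (b - d)); [apply: ler_normD | ring]. Qed.

Lemma rep_add f g M N : rep f M -> rep g N -> rep (fun t => f t + g t) (M + N).
Proof.
move=> [s [u [s0 u0 E HM]]] [s' [u' [s0' u0' E' HN]]].
exists (sadd s s'), (sadd u u'); split; try exact: sadd_nil.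
  by move=> t; rewrite E E' !mxa_add //; ring.
apply: le_trans (lerD HM HN); rewrite /Mof !hi_add // !lo_add //.
have T1 := tri4 (hi s) (hi s') (hi u) (hi u').
have T2 := tri4 (lo s) (lo s') (lo u) (lo u').
lra.
Qed.

Lemma Mof_sc c s u : 0 <= c -> s != [::] -> u != [::] -> Mof (sc c s) (sc c u) = c * Mof s u.
Proof.
move=> c0 s0 u0; rewrite /Mof !hi_sc // !lo_sc // -!mulrBr !normrM (ger0_norm c0); ring.
Qed.

Lemma Mof_sym s u : Mof s u = Mof u s.
Proof. by rewrite /Mof (distrC (hi s)) (distrC (lo s)); ring. Qed.

Lemma rep_scale c f M : rep f M -> rep (fun t => c * f t) (`|c| * M).
Proof.
move=> [s [u [s0 u0 E HM]]].
case: (leP 0 c) => c0.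
  exists (sc c s), (sc c u); split; try exact: sc_nil.
    by move=> t; rewrite E !mxa_sc //; ring.
  by rewrite Mof_sc // ger0_norm //; apply: ler_wpM2l.
have c0' : 0 <= - c by lra.
exists (sc (- c) u), (sc (- c) s); split; try exact: sc_nil.
  by move=> t; rewrite E !mxa_sc //; ring.
by rewrite Mof_sc // ltr0_norm // Mof_sym; apply: ler_wpM2l.
Qed.

Lemma rep_sum (I : Type) (r : seq I) (F : I -> R -> R) (M : I -> R) :
  (forall i, rep (F i) (M i)) ->
  rep (fun t => \sum_(i <- r) F i t) (\sum_(i <- r) M i).
Proof.
move=> HF; elim: r => [|i r IH].
  rewrite big_nil; apply: rep_le (rep_ext _ (rep_aff 0 0)).
    by rewrite normr0 mulr0.
  by move=> t; rewrite big_nil mul0r addr0.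
rewrite big_cons; apply: rep_ext (rep_add (HF i) IH) => t.
by rewrite big_cons.
Qed.

End PL.

Section Net.
Variable R : realType.

Lemma le_bigmax0 (I : eqType) (r : seq I) (F : I -> R) j :
  j \in r -> F j <= \big[Num.max/0]_(i <- r) F i.
Proof.
elim: r => // x r IH; rewrite in_cons big_cons => /orP[/eqP->|/IH H].
  by rewrite le_max lexx.
by rewrite le_max H orbT.
Qed.

Lemma bigmax0_ge0 (I : Type) (r : seq I) (F : I -> R) :
  0 <= \big[Num.max/0]_(i <- r) F i.
Proof.
elim: r => [|x r IH]; first by rewrite big_nil.
by rewrite big_cons le_max IH orbT.
Qed.

Lemma norm_ge0 m n (A : 'M[R]_(m, n)) : 0 <= mx_norm_inf A.
Proof. exact: bigmax0_ge0. Qed.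

Lemma row_le m n (A : 'M[R]_(m, n)) j : \sum_l `|A j l| <= mx_norm_inf A.
Proof. by apply: (le_bigmax0 (fun i => \sum_l `|A i l|)); rewrite mem_index_enum. Qed.

Lemma net_rep w (W : forall i : nat, 'M[R]_(w i.+1, w i)) (b : forall i : nat, 'cV[R]_(w i.+1))
  (W0 : 'M[R]_(w 0%N, 1)) (b0 : 'cV[R]_(w 0%N)) :
  mx_norm_inf W0 = 1 ->
  forall k (j : 'I_(w k)), rep (fun t => net_pre W b k (t *: W0 + b0) j 0)
                               (2 * \prod_(i < k) mx_norm_inf (W i)).
Proof.
move=> H0; elim => [|k IH] j.
  rewrite big_ord0 /=.
  apply: rep_le (rep_ext _ (rep_aff (W0 j 0) (b0 j 0))); last first.
    by move=> t /=; rewrite !mxE mulrC.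
  rewrite ler_pM2l // -H0; apply: le_trans (row_le W0 j).
  by rewrite big_ord1.
set C := \prod_(i < k) mx_norm_inf (W i).
have C0 : 0 <= C by apply: prodr_ge0 => i _; apply: norm_ge0.
have Hact : forall l, rep (fun t => ((if k == 0%N then id else @relu R _ _)
      (net_pre W b k (t *: W0 + b0))) l 0) (2 * C).
  move=> l; case: (k == 0%N) => /=; first exact: IH.
  by apply: rep_ext (rep_relu (IH l)) => t; rewrite mxE.
have Hs := @rep_sum R _ (index_enum 'I_(w k)) (fun l t => W k j l * ((if k == 0%N then id else @relu R _ _)
      (net_pre W b k (t *: W0 + b0))) l 0) (fun l => `|W k j l| * (2 * C))
      (fun l => rep_scale (W k j l) (Hact l)).
have Hb := rep_aff 0 (b k j 0).
apply: rep_le (rep_ext _ (rep_add Hs Hb)).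
  rewrite normr0 mulr0 addr0 -mulr_suml big_ord_recr /=.
  rewrite -/C mulrCA ler_pM2l // mulrC ler_wpM2l //.
  exact: row_le.
by move=> t /=; rewrite !mxE mul0r add0r.
Qed.

End Net.

Section An.
Variable R : realType.
Implicit Types (s u : seq (R * R)) (t : R).

Lemma near_all (T : Type) (F : set_system T) (FF : Filter F) (I : eqType) (r : seq I)
  (P : I -> T -> Prop) :
  (forall y, y \in r -> \forall e \near F, P y e) -> \forall e \near F, forall y, y \in r -> P y e.
Proof.
elim: r => [_|x r IH H]; first by apply: nearW => e y.
have Hx : \forall e \near F, P x e by apply: H; rewrite in_cons eqxx.
have Hr : \forall e \near F, forall y, y \in r -> P y e.
  by apply: IH => y yr; apply: H; rewrite in_cons yr orbT.
apply: filterS2 Hx Hr => e Px Pr y; rewrite in_cons => /orP[/eqP->//|]; exact: Pr.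
Qed.

Lemma mxa_eq_aff s x t : x \in s -> (forall y, y \in s -> aff y t <= aff x t) ->
  mxa s t = aff x t.
Proof. by move=> xs H; apply: gmE => //; [case: (s) xs | exists x]. Qed.

Definition rs s t := hi [seq x <- s | aff x t == mxa s t].

Lemma rs_att s t : s != [::] -> exists x, [/\ x \in s, aff x t = mxa s t, rs s t = x.1 &
  forall y, y \in s -> aff y t = mxa s t -> y.1 <= x.1].
Proof.
move=> s0.
have s1 : [seq x <- s | aff x t == mxa s t] != [::].
  have [x xs E] := gm_att (fun x => aff x t) s0.
  by apply/eqP => /(congr1 (fun l => x \in l)); rewrite mem_filter xs -E /mxa eqxx.
have [x] := gm_att (fun x : R * R => x.1) s1; rewrite mem_filter => /andP[/eqP ax xs] E.
exists x; split => // y ys ay; rewrite -E; apply: gm_ge.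
by rewrite mem_filter ys ay eqxx.
Qed.

Lemma rs_right s t : s != [::] ->
  \forall e \near 0^'+, mxa s (e + t) = mxa s t + e * rs s t.
Proof.
move=> s0; have [x [xs ax -> xmax]] := rs_att t s0.
have H : \forall e \near 0^'+, forall y, y \in s -> aff y (e + t) <= aff x (e + t).
  apply: near_all => y ys.
  have yle : aff y t <= aff x t by rewrite ax; apply: gm_ge.
  case: (leP y.1 x.1) => yx.
    near=> e; have e0 : 0 < e by near: e; apply: nbhs_right_gt.
    have : e * y.1 <= e * x.1 by apply: ler_wpM2l => //; apply: ltW.
    by move: yle; rewrite /aff; lra.
  have ylt : aff y t < aff x t.
    rewrite lt_neqAle yle andbT; apply/eqP => E.
    by move: (xmax y ys); rewrite E ax => /(_ erefl); rewrite leNgt yx.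
  have c0 : 0 < (aff x t - aff y t) / (y.1 - x.1) by apply: divr_gt0; lra.
  near=> e; have e0 : 0 < e by near: e; apply: nbhs_right_gt.
  have e1 : e < (aff x t - aff y t) / (y.1 - x.1) by near: e; apply: nbhs_right_lt.
  move: e1; rewrite ltr_pdivlMr; last by lra.
  by move: ylt; rewrite /aff; lra.
apply: filterS H => e H; rewrite (mxa_eq_aff xs H) -ax /aff; ring.
Unshelve. all: by end_near.
Qed.

Lemma rs_mono s t t' : s != [::] -> t < t' -> rs s t <= rs s t'.
Proof.
move=> s0 tt'; have [x [xs ax -> _]] := rs_att t s0.
have [y [ys ay -> _]] := rs_att t' s0.
have h1 : aff x t' <= aff y t' by rewrite ay; apply: gm_ge.
have h2 : aff y t <= aff x t by rewrite ax; apply: gm_ge.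
move: h1 h2; rewrite /aff => h1 h2.
have : (x.1 - y.1) * (t' - t) <= 0 by lra.
rewrite pmulr_lle0; last by lra.
lra.
Qed.

Lemma lo_le s x : x \in s -> lo s <= x.1.
Proof. by move=> xs; rewrite /lo lerNl; apply: (gm_ge (fun x : R * R => - x.1)). Qed.

Lemma hi_ge s x : x \in s -> x.1 <= hi s.
Proof. by move=> xs; apply: (gm_ge (fun x : R * R => x.1)). Qed.

Lemma rs_bounds s t : s != [::] -> lo s <= rs s t <= hi s.
Proof.
move=> s0; have [x [xs _ -> _]] := rs_att t s0.
by rewrite lo_le // hi_ge.
Qed.

End An.

Section An2.
Variable R : realType.
Implicit Types (s u : seq (R * R)) (t : R).

Lemma mxa_pinfty s : s != [::] -> exists B, \forall t \near +oo, mxa s t = hi s * t + B.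
Proof.
move=> s0; set s1 := [seq y <- s | y.1 == hi s].
have s10 : s1 != [::].
  have [x xs E] := gm_att (fun x : R * R => x.1) s0.
  by apply/eqP => /(congr1 (fun l => x \in l)); rewrite mem_filter xs -E /hi eqxx.
have [x] := gm_att (fun x : R * R => x.2) s10; rewrite mem_filter => /andP[/eqP x1 xs] x2.
exists x.2.
have H : \forall t \near +oo, forall y, y \in s -> aff y t <= aff x t.
  apply: near_all => y ys.
  case: (eqVneq y.1 (hi s)) => yh.
    apply: nearW => t; rewrite /aff yh x1 lerD2l -x2.
    by apply: (gm_ge (fun x : R * R => x.2)); rewrite mem_filter yh eqxx.
  have ylt : y.1 < x.1 by rewrite x1 lt_neqAle yh hi_ge.
  near=> t.
  have : (y.2 - x.2) / (x.1 - y.1) < t by near: t; apply: nbhs_pinfty_gt; apply: num_real.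
  rewrite ltr_pdivrMr; last by lra.
  rewrite /aff; lra.
apply: filterS H => t H; rewrite (mxa_eq_aff xs H) /aff x1.
Unshelve. all: by end_near.
Qed.

Lemma mxa_ninfty s : s != [::] -> exists B, \forall t \near -oo, mxa s t = lo s * t + B.
Proof.
move=> s0; set s1 := [seq y <- s | y.1 == lo s].
have s10 : s1 != [::].
  have [x xs E] := gm_att (fun x : R * R => - x.1) s0.
  apply/eqP => /(congr1 (fun l => x \in l)); rewrite mem_filter xs /lo E opprK eqxx.
  by [].
have [x] := gm_att (fun x : R * R => x.2) s10; rewrite mem_filter => /andP[/eqP x1 xs] x2.
exists x.2.
have H : \forall t \near -oo, forall y, y \in s -> aff y t <= aff x t.
  apply: near_all => y ys.
  case: (eqVneq y.1 (lo s)) => yh.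
    apply: nearW => t; rewrite /aff yh x1 lerD2l -x2.
    by apply: (gm_ge (fun x : R * R => x.2)); rewrite mem_filter yh eqxx.
  have ylt : x.1 < y.1 by rewrite x1 lt_neqAle eq_sym yh lo_le.
  near=> t.
  have : t < (x.2 - y.2) / (y.1 - x.1) by near: t; apply: nbhs_ninfty_lt; apply: num_real.
  rewrite ltr_pdivlMr; last by lra.
  rewrite /aff; lra.
apply: filterS H => t H; rewrite (mxa_eq_aff xs H) /aff x1.
Unshelve. all: by end_near.
Qed.

Lemma rderiv (f : R -> R) t c : derivable f t 1 ->
  (\forall e \near 0^'+, f (e + t) - f t = e * c) -> f^`() t = c.
Proof.
move=> df H; rewrite derive1E /derive cvg_at_rightE //.
apply: cvg_lim => //; apply: cvg_near_cst.
near=> e; have e0 : 0 < e by near: e; apply: nbhs_right_gt.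
rewrite /= [e *: 1]mulr1 (near H e) //.
by rewrite [_ *: _]mulrA mulVf ?mul1r // gt_eqF.
Unshelve. all: by end_near.
Qed.

Lemma affine_derivable (f : R -> R) A B x :
  (\forall y \near x, f y = A * y + B) -> derivable f x 1.
Proof.
move=> H; apply: (@near_eq_derivable _ _ _ (horner (A *: 'X + B%:P))); last first.
  exact: derivable_horner.
by apply: filterS H => y ->; rewrite !hornerE.
Qed.

End An2.

Section An3.
Variable R : realType.

Lemma var_mono (g u v : R -> R) (x : R) (s : seq R) : path <%R x s ->
  (forall t, t \in x :: s -> g t = u t - v t) ->
  (forall a b, a < b -> u a <= u b) -> (forall a b, a < b -> v a <= v b) ->
  var_sum g (x :: s) <= (u (last x s) - u x) + (v (last x s) - v x).
Proof.
move=> + + um vm; elim: s x => [|y s IH] x.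
  by move=> _ _; rewrite /= !subrr addr0.
move=> pxs E; have /andP[xy ps] : (x < y) && path <%R y s := pxs.
have -> : var_sum g [:: x, y & s] = `|g y - g x| + var_sum g (y :: s) by [].
have -> : last x (y :: s) = last y s by [].
have E' : forall t, t \in y :: s -> g t = u t - v t.
  by move=> t ts; apply: E; rewrite in_cons ts orbT.
have := IH y ps E'.
have Ey : g y = u y - v y by apply: E; rewrite !in_cons eqxx orbT.
have Ex : g x = u x - v x by apply: E; rewrite !in_cons eqxx.
have := um _ _ xy; have := vm _ _ xy.
rewrite Ey Ex => h1 h2 h3.
case: (abs_cases (u y - v y - (u x - v x))) => [[? ->]|[? ->]]; lra.
Qed.

Lemma an_main (h : R -> R) M : rep h M -> exists Lp Lm : R,
    (h^`() x @[x --> +oo] --> Lp) /\ (h^`() x @[x --> -oo] --> Lm) /\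
    forall s : seq R, sorted <%R s -> all (fun t => `[< derivable h t 1 >]) s ->
      var_sum h^`() s + `|Lp| + `|Lm| <= M.
Proof.
move=> [P [Q [P0 Q0 E HM]]].
exists (hi P - hi Q), (lo P - lo Q); split; [|split].
- have [B1 H1] := mxa_pinfty P0; have [B2 H2] := mxa_pinfty Q0.
  have : \forall t \near +oo, h t = (hi P - hi Q) * t + (B1 - B2).
    by apply: filterS2 H1 H2 => t e1 e2; rewrite E e1 e2; ring.
  case=> M0 [_ HM0].
  apply: cvg_near_cst; exists M0; split; first exact: num_real.
  move=> x xM; apply: rderiv.
    apply: affine_derivable; apply: filterS (lt_nbhsr xM) => y; exact: HM0.
  near=> e; have e0 : 0 < e by near: e; apply: nbhs_right_gt.
  rewrite !HM0 //; first ring.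
  lra.
- have [B1 H1] := mxa_ninfty P0; have [B2 H2] := mxa_ninfty Q0.
  have : \forall t \near -oo, h t = (lo P - lo Q) * t + (B1 - B2).
    by apply: filterS2 H1 H2 => t e1 e2; rewrite E e1 e2; ring.
  case=> M0 [_ HM0].
  apply: cvg_near_cst; exists M0; split; first exact: num_real.
  move=> x xM; apply: rderiv.
    apply: affine_derivable; apply: filterS (lt_nbhsl xM) => y; exact: HM0.
  have xM' : 0 < M0 - x by lra.
  near=> e; have e0 : e < M0 - x by near: e; apply: nbhs_right_lt.
  rewrite !HM0 //; first ring.
  lra.
have bP := fun t => rs_bounds t P0; have bQ := fun t => rs_bounds t Q0.
have key : forall s, sorted <%R s -> all (fun t => `[< derivable h t 1 >]) s ->
    var_sum h^`() s <= (hi P - lo P) + (hi Q - lo Q).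
  case=> [|x s] ps da.
    rewrite /=; have := bP 0; have := bQ 0 => /andP[? ?] /andP[? ?]; lra.
  apply: le_trans (var_mono (u := rs P) (v := rs Q) ps _ _ _) _.
  - move=> t ts; apply: rderiv.
      by move/allP: da => /(_ t ts) /asboolP.
    apply: filterS2 (rs_right t P0) (rs_right t Q0) => e e1 e2.
    rewrite !E e1 e2; ring.
  - by move=> a b; apply: rs_mono.
  - by move=> a b; apply: rs_mono.
  have := bP (last x s); have := bQ (last x s); have := bP x; have := bQ x.
  move=> /andP[? ?] /andP[? ?] /andP[? ?] /andP[? ?]; lra.
move=> s ss da; have := key s ss da; move: HM; rewrite /Mof; lra.
Unshelve. all: by end_near.
Qed.

End An3.

End Helpers.
Import Helpers.
Unset Implicit Arguments. Set Strict Implicit. Set Printing Implicit Defensive.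

Theorem theorem1 (R : realType) (k : R) (n : nat) (w : nat -> nat)
  (W : forall i : nat, 'M[R]_(w i.+1, w i)) (b : forall i : nat, 'cV[R]_(w i.+1))
  (W0 : 'M[R]_(w 0%N, 1)) (b0 : 'cV[R]_(w 0%N)) :
  0 < k -> (2 <= n)%N -> w n = 1%N ->
  \prod_(i < n) mx_norm_inf (W i) <= k ->
  mx_norm_inf W0 = 1 ->
  let h : R -> R := fun t => net W b n (t *: W0 + b0) in
  exists Lp Lm : R,
    (h^`() x @[x --> +oo] --> Lp) /\ (h^`() x @[x --> -oo] --> Lm) /\
    forall s : seq R, sorted <%R s -> all (fun t => `[< derivable h t 1 >]) s ->
      var_sum h^`() s + `|Lp| + `|Lm| <= 2 * k.
Proof.
move=> k0 n2 wn Hk H0 h.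
have Hrep : rep h (2 * \prod_(i < n) mx_norm_inf (W i)).
  have Hs := @rep_sum R _ (index_enum 'I_(w n))
    (fun i t => net_pre W b n (t *: W0 + b0) i 0)
    (fun _ => 2 * \prod_(i < n) mx_norm_inf (W i)) (@net_rep R w W b W0 b0 H0 n).
  apply: rep_le Hs; first by rewrite sumr_const card_ord wn.
have [Lp [Lm [H1 [H2 H3]]]] := an_main Hrep.
exists Lp, Lm; split => //; split => // s ss da.
apply: le_trans (H3 s ss da) _; rewrite ler_pM2l //.
Qed.
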